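(* Consider the program \[\Pi(\theta)=\max_{P}\int_0^\infty P(y)\,dy\quad\text{s.t.}\quad \lambda\int_0^\infty w_-(P(y))\,dy\le\theta,\] over functions $P:[0,\infty)\to[0,1]$ that are decreasing and right continuous. Its maximum value is $\mu^*\theta/\lambda$, and the unique optimal $P^*$ is \[P^*(y)=\begin{cases}p^* & \text{if } y<\frac{\mu^*\theta}{p^*\lambda},\\ 0 & \text{if } y\ge \frac{\mu^*\theta}{p^*\lambda}.\end{cases}\]
   Context: $\theta>0$, $\lambda>0$ are constants. $w_-:[0,1]\to[0,1]$ is strictly increasing, thrice differentiable, with $w_-(0)=0$, $w_-(1)=1$, $w_-'(0)>1$, $w_-'(1)>1$, $w_-'''>0$. $\mu^*=\max_{p\in(0,1]}p/w_-(p)$, and $p^*\in(0,1)$ is the unique point with $\mu^*w_-(p^* )=p^*$. ($P(y)$ is interpreted as the tail $P(T>y)$ of a nonnegative random price $T$.) *)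

(* Defs.v *)
From HB Require Import structures.
From mathcomp Require Import all_boot all_order all_algebra.
From mathcomp Require Import all_classical all_reals all_analysis.
Set Implicit Arguments. Unset Strict Implicit. Unset Printing Implicit Defensive.
Import Order.TTheory GRing.Theory Num.Theory.
Import numFieldNormedType.Exports.
Local Open Scope classical_set_scope.
Local Open Scope ring_scope.

(* Assumptions on the probability weighting function w_- : [0,1] -> [0,1].
   w is given as a function R -> R; only its values on [0,1] matter.
   Thrice differentiability on [0,1] (one-sided at endpoints) is rendered as
   thrice differentiability on R (every such function on [0,1] extends). *)
Definition weighting (R : realType) (w : R -> R) : Prop :=
  (forall x, 0 <= x <= 1 -> 0 <= w x <= 1) /\
  (forall x y, 0 <= x -> x < y -> y <= 1 -> w x < w y) /\
  w 0 = 0 /\ w 1 = 1 /\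
  (forall x, derivable w x 1) /\
  (forall x, derivable (derive1 w) x 1) /\
  (forall x, derivable (derive1n 2 w) x 1) /\
  1 < derive1 w 0 /\ 1 < derive1 w 1 /\
  (forall x, 0 <= x <= 1 -> 0 < derive1n 3 w x).

Definition is_mu_star (R : realType) (w : R -> R) (mu : R) : Prop :=
  (forall p, 0 < p <= 1 -> p / w p <= mu) /\
  (exists2 p, 0 < p <= 1 & p / w p = mu).

Definition is_p_star (R : realType) (w : R -> R) (mu ps : R) : Prop :=
  [/\ 0 < ps < 1, mu * w ps = ps &
      (forall p, 0 < p < 1 -> mu * w p = p -> p = ps)].

Definition admissible (R : realType) (P : R -> R) : Prop :=
  [/\ (forall y, 0 <= y -> 0 <= P y <= 1),
      (forall x y, 0 <= x -> x <= y -> P y <= P x)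
    & (forall y, 0 <= y -> P x @[x --> y^'+] --> P y)].

Definition integral0oo (R : realType) (f : R -> R) : \bar R :=
  (\int[@lebesgue_measure R]_(y in `[0%R, +oo[%classic) (f y)%:E)%E.

Definition feasible (R : realType) (w : R -> R) (lam theta : R) (P : R -> R)
  : Prop :=
  admissible P /\ (lam%:E * integral0oo (fun y => w (P y)) <= theta%:E)%E.

Definition Pstar (R : realType) (mu ps lam theta : R) (y : R) : R :=
  if y < mu * theta / (ps * lam) then ps else 0.

(* Main.v *)
Require Import Defs.
From HB Require Import structures.
From mathcomp Require Import all_boot all_order all_algebra.
From mathcomp Require Import all_classical all_reals all_analysis.
From mathcomp Require Import ring lra measurable_realfun.
Import Order.TTheory GRing.Theory Num.Theory.
Local Open Scope ring_scope.

Module Helpers.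
Import numFieldNormedType.Exports.
Local Open Scope classical_set_scope.
Local Open Scope ring_scope.


Lemma near_left_pt (R : realType) (Q : R -> Prop) :
  (\forall h \near (0:R)^', Q h) -> exists t, 0 < t < 1 /\ Q (- t).
Proof.
move=> /nbhs_ballP [e /= e0 He].
have h1 : 0 < Num.min (e/2) (1/2) by rewrite lt_min; apply/andP; split; lra.
have h2 : Num.min (e/2) (1/2) <= e/2 by rewrite ge_min lexx.
have h3 : Num.min (e/2) (1/2) <= 1/2 by rewrite ge_min lexx orbT.
exists (Num.min (e/2) (1/2)).
split; first by apply/andP; split; lra.
apply: He; last by rewrite oppr_eq0 gt_eqF.
rewrite /ball /= sub0r opprK gtr0_norm //; lra.
Qed.

Arguments near_left_pt {R Q}.
Lemma w_pos (R : realType) (w : R -> R) : weighting w -> forall p, 0 < p <= 1 -> 0 < w p.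
Proof.
move=> [_ [hinc [h0 _]]] p /andP[p0 p1].
by rewrite -h0; apply: hinc.
Qed.

Arguments w_pos {R w}.
Lemma mu_gt1 (R : realType) (w : R -> R) mu : weighting w -> is_mu_star w mu -> 1 < mu.
Proof.
move=> hw [hmu _].
have hw' := hw.
move: hw' => [_ [_ [_ [w1 [dw [_ [_ [_ [d1 _]]]]]]]]].
have hc := dw 1.
have hl : (fun h => h^-1 *: ((w \o shift 1) (h *: 1) - w 1)) @ (0:R)^' --> derive1 w 1.
  by rewrite derive1E; exact: hc.
have [t [/andP[t0 t1] Ht]] := near_left_pt (cvgr_gt _ hl _ d1).
move: Ht; rewrite /= w1.
have -> : (- t)%:A + 1 = 1 - t by rewrite /GRing.scale /= mulr1 addrC.
rewrite /GRing.scale /=.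
have q0 : 0 < w (1 - t) by apply: (w_pos hw); apply/andP; split; lra.
rewrite invrN mulNr -mulrN opprB => H.
have H2 : t < 1 - w (1 - t).
  by move: H; rewrite ltr_pdivlMl // mulr1.
have H3 : (1 - t) / w (1 - t) <= mu by apply: hmu; apply/andP; split; lra.
apply: lt_le_trans H3.
by rewrite ltr_pdivlMr // mul1r; lra.
Qed.




Lemma int_step (R : realType) (c u v : R) : 0 <= c -> 0 <= u <= v ->
  integral0oo (fun y => c * \1_(`[u, v[%classic) y) = (c * (v - u))%:E.
Proof.
move=> c0 /andP[u0 uv].
rewrite /integral0oo.
have E := @integralZl_indic _ _ _ (@lebesgue_measure R) `[0%R, +oo[%classic
  (measurable_itv _) (fun _ => `[u, v[%classic) c.
rewrite /= in E; rewrite E //; last by move=> /lt_geF; rewrite c0.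
rewrite integral_indic //.
rewrite setIidl; last first.
  move=> x /=; rewrite !in_itv /= => /andP[ux _].
  by rewrite (le_trans u0 ux).
transitivity (c%:E * (@lebesgue_measure R) `[u, v[%classic)%E; first by [].
rewrite lebesgue_measure_itv /= lte_fin.
case: ltP => [uv'|vu]; first by rewrite -EFinD -EFinM.
have -> : v - u = 0 by apply/eqP; rewrite subr_eq0 eq_le uv vu.
by rewrite mulr0 mule0.
Qed.

Lemma meas_mono (R : realType) (f : R -> R) :
  (forall x y, 0 <= x -> x <= y -> f y <= f x) ->
  measurable_fun (`[0%R, +oo[%classic : set R) f.
Proof.
move=> hf.
have H : measurable_fun (`[0%R, +oo[%classic : set R) (fun y => f (Num.max y 0)).
  apply: nonincreasing_measurable => //.
  move=> x y xy; apply: hf; first by rewrite le_max lexx orbT.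
  by rewrite ge_max !le_max xy lexx !orbT.
apply: (eq_measurable_fun _ _ H).
move=> y; rewrite inE /= in_itv /= andbT => y0.
by rewrite max_l.
Qed.

Lemma meas_step (R : realType) (c u v : R) :
  measurable_fun (`[0%R, +oo[%classic : set R) (fun y => c * \1_(`[u, v[%classic) y).
Proof.
apply: measurable_funM; first exact: measurable_cst.
exact: measurable_indic.
Qed.

Lemma int_le (R : realType) (f g : R -> R) :
  measurable_fun (`[0%R, +oo[%classic : set R) f -> measurable_fun (`[0%R, +oo[%classic : set R) g ->
  (forall y, 0 <= y -> 0 <= f y <= g y) ->
  (integral0oo f <= integral0oo g)%E.
Proof.
move=> mf mg h.
apply: ge0_le_integral => //.
- by move=> y /=; rewrite in_itv /= andbT => /h /andP[? _]; rewrite lee_fin.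
- by apply/measurable_EFinP.
- by apply/measurable_EFinP.
- by move=> y /=; rewrite in_itv /= andbT => /h /andP[_ ?]; rewrite lee_fin.
Qed.


Lemma ind_val (R : realType) (u v y : R) :
  (\1_(`[u, v[%classic) y : R) = if (u <= y) && (y < v) then 1 else 0.
Proof.
rewrite indicE.
case: ifP => h.
  by rewrite mem_set //= in_itv /= h.
rewrite memNset //= in_itv /= h //.
Qed.

Lemma near_right_pt (R : realType) (y : R) (Q : R -> Prop) :
  (\forall x \near y^'+, Q x) -> exists2 d, 0 < d & forall x, y < x < y + d -> Q x.
Proof.
move=> /nbhs_ballP [e /= e0 He].
exists e => // x /andP[yx xe].
apply: He => //.
rewrite /ball /= ltr0_norm ?subr_lt0 //; lra.
Qed.

Lemma wcont (R : realType) (w : R -> R) : weighting w -> forall x, {for x, continuous w}.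
Proof.
move=> [_ [_ [_ [_ [dw _]]]]] x.
apply: differentiable_continuous.
by apply/derivable1_diffP.
Qed.

Lemma gcvg (R : realType) (w P : R -> R) (mu y : R) : weighting w ->
  P x @[x --> y^'+] --> P y ->
  (mu * w (P x) - P x) @[x --> y^'+] --> (mu * w (P y) - P y).
Proof.
move=> hw hP.
apply: cvgB => //.
apply: cvgM; first exact: cvg_cst.
apply: cvg_comp hP _.
exact: wcont.
Qed.

Lemma int_eq (R : realType) (f g : R -> R) :
  (forall y, 0 <= y -> f y = g y) -> integral0oo f = integral0oo g.
Proof.
move=> h; apply: eq_integral => y; rewrite inE /= in_itv /= andbT => /h ->//.
Qed.

Lemma int_scale (R : realType) (c : R) (f : R -> R) : 0 <= c ->
  (forall y, 0 <= y -> 0 <= f y) ->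
  measurable_fun (`[0%R, +oo[%classic : set R) f ->
  integral0oo (fun y => c * f y) = (c%:E * integral0oo f)%E.
Proof.
move=> c0 f0 mf; rewrite /integral0oo.
have f0' : forall y, (`[0%R, +oo[%classic : set R) y -> (0 <= (f y)%:E)%E.
  by move=> y /=; rewrite in_itv /= andbT => /f0; rewrite lee_fin.
have mf' : measurable_fun (`[0%R, +oo[%classic : set R) (EFin \o f).
  by apply/measurable_EFinP.
under eq_integral do rewrite EFinM.
by apply: ge0_integralZl => //; rewrite lee_fin.
Qed.

Lemma int_add (R : realType) (f g : R -> R) :
  (forall y, 0 <= y -> 0 <= f y) -> (forall y, 0 <= y -> 0 <= g y) ->
  measurable_fun (`[0%R, +oo[%classic : set R) f ->
  measurable_fun (`[0%R, +oo[%classic : set R) g ->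
  integral0oo (fun y => f y + g y) = (integral0oo f + integral0oo g)%E.
Proof.
move=> f0 g0 mf mg; rewrite /integral0oo.
have f0' : forall y, (`[0%R, +oo[%classic : set R) y -> (0 <= (f y)%:E)%E.
  by move=> y /=; rewrite in_itv /= andbT => /f0; rewrite lee_fin.
have mf' : measurable_fun (`[0%R, +oo[%classic : set R) (EFin \o f).
  by apply/measurable_EFinP.
have g0' : forall y, (`[0%R, +oo[%classic : set R) y -> (0 <= (g y)%:E)%E.
  by move=> y /=; rewrite in_itv /= andbT => /g0; rewrite lee_fin.
have mg' : measurable_fun (`[0%R, +oo[%classic : set R) (EFin \o g).
  by apply/measurable_EFinP.
under eq_integral do rewrite EFinD.
by apply: ge0_integralD.
Qed.

Lemma fin_of (R : realType) (x : \bar R) (c : R) :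
  (0 <= x)%E -> (x <= c%:E)%E -> exists r, x = r%:E.
Proof.
by case: x => [r| |] //; exists r.
Qed.

Arguments mu_gt1 {R w mu}.
Arguments int_step {R}.
Arguments meas_mono {R f}.
Arguments meas_step {R}.
Arguments int_le {R f g}.
Arguments ind_val {R}.
Arguments near_right_pt {R y Q}.
Arguments wcont {R w}.
Arguments gcvg {R w P}.
Arguments int_eq {R f g}.
Arguments int_scale {R c f}.
Arguments int_add {R f g}.
End Helpers.
Import Helpers.

Theorem proposition1 (R : realType) (theta lam : R) (w : R -> R) (mu ps : R)
  (htheta : 0 < theta) (hlam : 0 < lam)
  (hw : weighting w) (hmu : is_mu_star w mu) (hps : is_p_star w mu ps) :
  [/\ feasible w lam theta (Pstar mu ps lam theta),
      integral0oo (Pstar mu ps lam theta) = (mu * theta / lam)%:E,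
      (forall P, feasible w lam theta P ->
         (integral0oo P <= (mu * theta / lam)%:E)%E)
    & (forall P, feasible w lam theta P ->
         integral0oo P = (mu * theta / lam)%:E ->
         forall y, 0 <= y -> P y = Pstar mu ps lam theta y)].
Proof.
have mu1 := mu_gt1 hw hmu.
have hw' := hw.
move: hw' => [hw01 [hinc [w0 [w1 _]]]].
case: hps => /andP[ps0 ps1] hmups hpsu.
have mu0 : 0 < mu by lra.
set a := mu * theta / (ps * lam).
have a0 : 0 < a by rewrite /a; apply: divr_gt0; apply: mulr_gt0.
have Ma : mu * theta / lam = ps * a.
  rewrite /a; field.
  by rewrite !gt_eqF.
have K : forall p, 0 <= p <= 1 -> p <= mu * w p.
  move=> p /andP[p0 p1]; case: (ltP 0 p) => [pp|pn].
    have := hmu.1 p; rewrite pp p1 => /(_ isT).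
    by rewrite ler_pdivrMr ?(w_pos hw) ?pp ?p1 // mulrC.
  have -> : p = 0 by apply/eqP; rewrite eq_le pn p0.
  by rewrite w0 mulr0.
have PsE : forall y, 0 <= y -> Pstar mu ps lam theta y = ps * \1_(`[0, a[%classic) y.
  move=> y y0; rewrite /Pstar -/a ind_val y0 /=.
  by case: ifP; rewrite ?mulr1 ?mulr0.
have wPsE : forall y, 0 <= y -> w (Pstar mu ps lam theta y) = w ps * \1_(`[0, a[%classic) y.
  move=> y y0; rewrite /Pstar -/a ind_val y0 /=.
  by case: ifP; rewrite ?mulr1 ?mulr0 ?w0.
have wps : w ps = ps / mu.
  by rewrite -[in RHS]hmups [mu * _]mulrC mulfK // gt_eqF.
have wps0 : 0 <= w ps by rewrite wps; apply: divr_ge0; lra.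
have bound : forall P, feasible w lam theta P ->
  [/\ measurable_fun (`[0%R, +oo[%classic : set R) P,
      measurable_fun (`[0%R, +oo[%classic : set R) (fun y => w (P y)) &
      exists r, [/\ integral0oo (fun y => w (P y)) = r%:E, 0 <= r & lam * r <= theta]].
  move=> P [[P01 Pmono Prc] hc].
  have mP := meas_mono Pmono.
  have mwP : measurable_fun (`[0%R, +oo[%classic : set R) (fun y => w (P y)).
    apply: meas_mono => x y x0 xy.
    have y0 := le_trans x0 xy.
    have /andP[py0 py1] := P01 y y0.
    have /andP[px0 px1] := P01 x x0.
    case: (ltP (P y) (P x)) => h; first by apply: ltW; apply: hinc.
    by have -> : P y = P x by apply/eqP; rewrite eq_le h Pmono.
  split => //.
  have I0 : (0 <= integral0oo (fun y => w (P y)))%E.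
    apply: integral_ge0 => y /=; rewrite in_itv /= andbT => y0.
    by rewrite lee_fin; have /andP[] := hw01 (P y) (P01 y y0).
  move: hc I0; case: (integral0oo (fun y => w (P y))) => [r| |] //.
    by rewrite -EFinM !lee_fin => hc r0; exists r.
  by rewrite mulry gtr0_sg // mul1e.
split.
- split.
  + split.
    * by move=> y _; rewrite /Pstar; case: ifP => _; apply/andP; split; lra.
    * move=> x y x0 xy; rewrite /Pstar -/a.
      case: (ltP y a) => ya; first by rewrite (le_lt_trans xy ya).
      by case: ifP => _; lra.
    * move=> y y0; rewrite /Pstar -/a.
      case: (ltP y a) => ya.
        apply/cvgrPdist_lt => e e0; near=> x.
        have -> : x < a by near: x; exact: nbhs_right_lt.
        by rewrite subrr normr0.
      apply/cvgrPdist_lt => e e0; near=> x.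
      have -> : (x < a) = false.
        apply/negbTE; rewrite -leNgt; apply: (le_trans ya); apply: ltW.
        by near: x; exact: nbhs_right_gt.
      by rewrite subrr normr0.
  + rewrite (int_eq wPsE) int_step //; last by rewrite lexx ltW.
    rewrite -EFinM lee_fin subr0 wps /a le_eqVlt; apply/orP; left; apply/eqP.
    field; rewrite !gt_eqF //.
- by rewrite (int_eq PsE) int_step ?subr0 ?Ma //; [lra | rewrite lexx ltW].
- move=> P hf.
  have [mP mwP [r [Er r0 lr]]] := bound P hf.
  case: hf => [[P01 Pmono Prc] _].
  have mmw : measurable_fun (`[0%R, +oo[%classic : set R) (fun y => mu * w (P y)).
    exact: measurable_funM (measurable_cst _) mwP.
  apply: (le_trans (int_le mP mmw _)).
    by move=> y y0; have /andP[p0 p1] := P01 y y0; rewrite p0 /=; apply: K; rewrite p0 p1.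
  rewrite int_scale ?Er //; last 2 first.
  - by apply: ltW.
  - by move=> y y0; have /andP[] := hw01 (P y) (P01 y y0).
  rewrite -EFinM lee_fin -mulrA; apply: ler_wpM2l; first exact: ltW.
  by rewrite ler_pdivlMr // mulrC.
- move=> P hf hint t t0.
  have [mP mwP [r [Er r0 lr]]] := bound P hf.
  case: hf => [[P01 Pmono Prc] _].
  have mmw : measurable_fun (`[0%R, +oo[%classic : set R) (fun y => mu * w (P y)).
    exact: measurable_funM (measurable_cst _) mwP.
  have Imw : integral0oo (fun y => mu * w (P y)) = (mu * r)%:E.
    rewrite int_scale ?Er ?EFinM //; first by apply: ltW.
    by move=> y y0; have /andP[] := hw01 (P y) (P01 y y0).
  have mrM : mu * r <= ps * a.
    rewrite -Ma -mulrA; apply: ler_wpM2l; first exact: ltW.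
    by rewrite ler_pdivlMr // mulrC.
  have eqP0 : forall z, 0 <= z -> mu * w (P z) = P z.
    move=> z z0; apply/eqP; apply/negPn/negP => hne.
    have /andP[pz0 pz1] := P01 z z0.
    have Kz := K (P z) (P01 z z0).
    set eps := mu * w (P z) - P z.
    have eps0 : 0 < eps by rewrite /eps subr_gt0 lt_neqAle Kz eq_sym hne.
    have hg := gcvg mu z hw (Prc z z0).
    have [d d0 Hd] := near_right_pt (cvgr_gt _ hg (eps/2) ltac:(rewrite -/eps; lra)).
    have Hge : forall x, 0 <= x ->
        0 <= P x + eps/2 * \1_(`[z, z + d[%classic) x <= mu * w (P x).
      move=> x x0; have /andP[px0 px1] := P01 x x0; rewrite ind_val.
      case: ifP => [/andP[zx xd]|_]; last first.
        by rewrite mulr0 addr0 px0 /=; apply: K; rewrite px0 px1.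
      rewrite mulr1; apply/andP; split; first lra.
      case: (ltP z x) => zx'.
        have := Hd x; rewrite zx' xd => /(_ isT) /=; lra.
      have -> : x = z by apply/eqP; rewrite eq_le zx zx'.
      rewrite /eps in eps0 *; lra.
    have mS := meas_step (eps/2) z (z + d).
    have := int_le (measurable_funD mP mS) mmw Hge.
    have f0 : forall y, 0 <= y -> 0 <= P y by move=> y y0; have /andP[] := P01 y y0.
    have s0 : forall y, 0 <= y -> 0 <= eps / 2 * \1_(`[z, z + d[%classic) y.
      move=> y y0; apply: mulr_ge0; [lra|]; rewrite ind_val; case: ifP => _; lra.
    rewrite Imw (int_add f0 s0 mP mS) hint int_step; last 2 first.
    - lra.
    - by rewrite z0 /= lerDl ltW.
    rewrite -EFinD lee_fin Ma => H.
    have : 0 < eps / 2 * (z + d - z) by rewrite addrC addKr; apply: mulr_gt0; lra.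
    lra.
  have vals : forall z, 0 <= z -> P z = 0 \/ P z = ps.
    move=> z z0; have /andP[p0 p1] := P01 z z0.
    case: (eqVneq (P z) 0) => [->|nz]; [by left | right].
    have pz : 0 < P z by rewrite lt_neqAle eq_sym nz p0.
    case: (eqVneq (P z) 1) => [e1|n1].
      have := eqP0 z z0; rewrite e1 w1 mulr1 => mu1'; lra.
    apply: hpsu; last exact: eqP0.
    by rewrite pz /= lt_neqAle n1 p1.
  have Ips : forall b, 0 <= b ->
      integral0oo (fun x => ps * \1_(`[0, b[%classic) x) = (ps * b)%:E.
    by move=> b b0; rewrite int_step ?subr0 ?lexx ?b0 //; lra.
  rewrite /Pstar -/a; case: ifPn => ya.
  + case: (vals t t0) => // Py0; exfalso.
    have Hle : forall z, 0 <= z -> 0 <= P z <= ps * \1_(`[0, t[%classic) z.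
      move=> z z0; have /andP[p0 p1] := P01 z z0; rewrite p0 ind_val z0 /=.
      case: ifP => zy; first by rewrite mulr1; case: (vals z z0) => ->; lra.
      by rewrite mulr0 -Py0; apply: Pmono => //; rewrite leNgt zy.
    have := int_le mP (meas_step ps 0 t) Hle.
    rewrite hint Ips // lee_fin Ma => H.
    have : ps * t < ps * a by rewrite ltr_pM2l.
    lra.
  + case: (vals t t0) => // Pyps; exfalso.
    have ay : a <= t by rewrite leNgt.
    have [d d0 Hd] := near_right_pt (cvgr_gt _ (Prc t t0) (ps/2) ltac:(rewrite Pyps; lra)).
    set x1 := t + d / 2.
    have x10 : 0 <= x1 by rewrite /x1; apply: addr_ge0 => //; lra.
    have Px1 : P x1 = ps.
      have := Hd x1; rewrite /x1 => /(_ ltac:(apply/andP; split; lra)).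
      by case: (vals (t + d/2) ltac:(lra)) => ->; lra.
    have Hge : forall z, 0 <= z -> 0 <= ps * \1_(`[0, x1[%classic) z <= P z.
      move=> z z0; have /andP[p0 p1] := P01 z z0; rewrite ind_val z0 /=.
      case: ifP => zx; last by rewrite mulr0 lexx p0.
      rewrite mulr1 -{2}Px1; apply/andP; split; first lra.
      by apply: Pmono => //; apply: ltW.
    have := int_le (meas_step ps 0 x1) mP Hge.
    rewrite hint Ips // lee_fin Ma => H.
    have : ps * a < ps * x1 by rewrite ltr_pM2l // /x1; lra.
    lra.
Unshelve. all: by end_near.
Qed.
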